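(* Let $n\in\mathbb{Z}$ and let $A$ be a $3\times 3$ matrix with integer entries. Then $A$ is a Cappell–Shaneson matrix with trace $n$ if and only if $f_n(A)=O$, where $f_n(x)=x^3-nx^2+(n-1)x-1$ and $O$ is the $3\times 3$ zero matrix.
   Context: A Cappell–Shaneson (CS) matrix is a matrix $A\in SL(3;\mathbb{Z})$ with $\det(A-I)=1$. The polynomial $f_n(x)=x^3-nx^2+(n-1)x-1$ is irreducible over $\mathbb{Q}$ for every integer $n$; this is a known fact that may be used. *)

(* Defs.v *)
From mathcomp Require Import all_boot all_order all_algebra.
Set Implicit Arguments. Unset Strict Implicit. Unset Printing Implicit Defensive.
Import GRing.Theory Num.Theory.
Local Open Scope ring_scope.

Definition CS_matrix (A : 'M[int]_3) : Prop :=
  \det A = 1 /\ \det (A - 1%:M) = 1.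

Definition f_poly (n : int) : {poly int} :=
  'X^3 - n%:P * 'X^2 + (n - 1)%:P * 'X - 1.

(* Main.v *)
Require Import Defs.
From mathcomp Require Import all_boot all_order all_algebra.
From mathcomp Require Import ring zify.
Import GRing.Theory Num.Theory.
Local Open Scope ring_scope.

Lemma noroot_int (n a b : int) : 0 < b -> coprimez a b ->
  a^+3 - n*a^+2*b + (n-1)*a*b^+2 - b^+3 != 0.
Proof.
move=> hb hc; apply/eqP => he.
have hb1 : (b %| 1 * a^+3)%Z.
  apply/dvdzP; exists (n*a^+2 - (n-1)*a*b + b^+2).
  by rewrite mul1r; apply/eqP; rewrite -subr_eq0 -he; apply/eqP; ring.
rewrite Gauss_dvdzl ?dvdz1 in hb1; last first.
  by apply: coprimezXr; rewrite coprimez_sym.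
have b1 : b = 1 by lia.
subst b.
have ha : (a %| 1)%Z.
  apply/dvdzP; exists (a^+2 - n*a + (n-1)).
  have h' : (a^+2 - n*a + (n-1)) * a - 1 = 0 by rewrite -he; ring.
  by apply/eqP; rewrite eq_sym -subr_eq0 h'.
rewrite dvdz1 in ha.
have : a = 1 \/ a = -1 by lia.
move=> hh; move: he; case: hh => ->; rewrite ?expr1n; lia.
Qed.

Lemma fQ_eval (n : int) (x : rat) :
  (map_poly (intr : int -> rat) (f_poly n)).[x] =
  x^+3 - n%:~R * x^+2 + (n%:~R - 1) * x - 1.
Proof.
have hX : map_poly (intr : int -> rat) 'X = 'X by exact: map_polyX.
have hC : map_poly (intr : int -> rat) n%:P = (n%:~R)%:P by exact: map_polyC.
rewrite /f_poly !(rmorphB, rmorphD, rmorphM, rmorphN, rmorphXn, rmorph1, map_polyX, map_polyC) /=.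
rewrite ?hX ?hC.
rewrite !(hornerD, hornerN, hornerM, hornerX, hornerC, hornerXn) /=.
ring.
Qed.

Lemma fQ_noroot (n : int) (x : rat) :
  ~~ root (map_poly (intr : int -> rat) (f_poly n)) x.
Proof.
rewrite /root fQ_eval; apply/negP => /eqP he.
have hq := numqE x.
have := @noroot_int n (numq x) (denq x) (denq_gt0 x) (coprime_num_den x).
set a := numq x; set b := denq x.
have key : ((a^+3 - n*a^+2*b + (n-1)*a*b^+2 - b^+3)%:~R : rat)
   = (b%:~R)^+3 * (x^+3 - n%:~R * x^+2 + (n%:~R - 1) * x - 1).
  rewrite !(rmorphB, rmorphD, rmorphM, rmorphN, rmorphXn, rmorph1) /= hq.
  ring.
by rewrite -(intr_eq0 rat) key he mulr0 eqxx.
Qed.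
Lemma f_coef3 n : (f_poly n)`_3 = 1.
Proof. rewrite /f_poly !coefE /=; ring. Qed.

Lemma f_size n : size (f_poly n) = 4%N.
Proof.
apply/eqP; rewrite eqn_leq; apply/andP; split.
  apply/leq_sizeP => j hj; rewrite /f_poly !coefE.
  case: j hj => [|[|[|[|j]]]] //= _; ring.
rewrite ltnNge; apply/negP => /leq_sizeP/(_ 3%N (leqnn _)).
by rewrite f_coef3.
Qed.

Lemma f_monic n : f_poly n \is monic.
Proof. by rewrite monicE /lead_coef f_size f_coef3. Qed.
Lemma cubE (p : {poly int}) : size p = 4%N -> p \is monic ->
  p = 'X^3 + p`_2 *: 'X^2 + p`_1 *: 'X + (p`_0)%:P.
Proof.
move=> hs hm.
apply/polyP=> k; rewrite !coefE.
case: k => [|[|[|[|k]]]]; rewrite /=; try ring.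
  by move/monicP: hm; rewrite /lead_coef hs => ->; ring.
rewrite nth_default ?hs //; ring.
Qed.

Lemma cp1 (A : 'M[int]_3) : (char_poly A).[1] = - \det (A - 1%:M).
Proof.
have -> : (char_poly A).[1] = horner_eval 1 (char_poly A) by [].
rewrite /char_poly -det_map_mx.
have -> : map_mx (horner_eval 1) (char_poly_mx A) = (-1) *: (A - 1%:M).
  apply/matrixP=> i j; rewrite !mxE /= /horner_eval.
  case: (i == j); rewrite !hornerE /=; ring.
rewrite detZ; ring.
Qed.

Lemma cp_iff (n : int) (A : 'M[int]_3) :
  char_poly A = f_poly n <-> (CS_matrix A /\ \tr A = n).
Proof.
have h2 : (char_poly A)`_2 = - \tr A by exact: (char_poly_trace A).
have h0 : (char_poly A)`_0 = - \det A by rewrite char_poly_det; ring.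
have h1 := cp1 A.
have hE := @cubE _ (size_char_poly A) (char_poly_monic A).
move: h2 h0 h1 hE; set p := char_poly A; clearbody p => h2 h0 h1 hE.
have hv : p.[1] = 1 + p`_2 + p`_1 + p`_0.
  by rewrite {1}hE !(hornerD, hornerZ, hornerXn, hornerX, hornerC) expr1n !mulr1.
rewrite /CS_matrix /f_poly; split.
  move=> hp; subst p.
  move: h2 h0 h1 hv; rewrite !coefE !hornerE /=.
  move=> h2 h0 h1 hv.
  split; [split|]; lia.
move=> [[hd hd1] ht].
have c1 : p`_1 = n - 1 by lia.
have c2 : p`_2 = - n by lia.
have c0 : p`_0 = - 1 by lia.
rewrite hE c1 c2 c0 -!mul_polyC polyCN polyCB; ring.
Qed.

Lemma intrQ_inj : injective (intr : int -> rat).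
Proof. by move=> a b h; apply/eqP; rewrite -(eqr_int rat) h. Qed.

Lemma back (n : int) (A : 'M[int]_3) :
  horner_mx A (f_poly n) = 0 -> char_poly A = f_poly n.
Proof.
move=> h.
set B := map_mx (intr : int -> rat) A.
set fQ := map_poly (intr : int -> rat) (f_poly n).
have hB : horner_mx B fQ = 0 by rewrite /B /fQ -map_horner_mx h map_mx0.
have hsz : size fQ = 4%N.
  rewrite /fQ size_map_inj_poly ?f_size //; try exact: intrQ_inj; exact: rmorph0.
have hmon : fQ \is monic by apply: monic_map; exact: f_monic.
have hirr : irreducible_poly fQ.
  by apply: cubic_irreducible; [rewrite hsz | exact: fQ_noroot].
have hd : mxminpoly B %| fQ := mxminpoly_min hB.
have hmin : mxminpoly B = fQ.
  have hs1 : size (mxminpoly B) != 1%N.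
    by rewrite size_mxminpoly; have := mxminpoly_nonconstant B; case: (degree_mxminpoly B).
  have := hirr.2 _ hs1 hd.
  by rewrite eqp_monic ?mxminpoly_monic // => /eqP.
have hch : char_poly B = fQ.
  have hd2 := mxminpoly_dvd_char B; rewrite hmin in hd2.
  apply/eqP; rewrite -eqp_monic ?char_poly_monic // eqp_sym -dvdp_size_eqp //.
  by rewrite size_char_poly hsz.
apply: (map_inj_poly intrQ_inj (rmorph0 _)).
by rewrite map_char_poly.
Qed.

Theorem mainTheorem1 (n : int) (A : 'M[int]_3) :
  (CS_matrix A /\ \tr A = n) <-> horner_mx A (f_poly n) = 0.
Proof.
split.
  move/cp_iff => <-; exact: Cayley_Hamilton.
by move/back/cp_iff.
Qed.
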